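(* Assume the Setting (S). For every $N\ge1$, $h_N>0$ everywhere and $$\partial\bar\partial\log h_N=h_{N-1}-2h_N+h_{N+1}$$ (the Ricci form of the Kähler form $h_N\,dx\wedge dy$ equals the second difference of the Kähler forms $h_{N-1},h_N,h_{N+1}$).
   Context: Setting (S). Let $\mathcal H$ be a separable complex Hilbert space with inner product $\langle\cdot|\cdot\rangle$, antilinear in the first slot. Let $\Lambda\subset\mathbb C$ be a lattice with fundamental domain $D$. Write $z=x+iy$, $\partial=\tfrac12(\partial_x-i\partial_y)$, $\bar\partial=\tfrac12(\partial_x+i\partial_y)$. Let $f:\mathbb C\to\mathcal H$ be holomorphic and satisfy: (i) for every $z\in\mathbb C$ and every $n\ge0$ the vectors $f(z),\partial f(z),\dots,\partial^n f(z)$ are linearly independent; (ii) for every $\lambda\in\Lambda$ there are a nowhere-vanishing holomorphic function $c_\lambda:\mathbb C\to\mathbb C$ and a unitary operator $V_\lambda$ on $\mathcal H$ independent of $z$ such that $f(z+\lambda)=c_\lambda(z)V_\lambda f(z)$ for all $z$. For $n\ge0$ let $P_n(z)$ be the orthogonal projector onto $\mathrm{span}\{f(z),\partial f(z),\dots,\partial^{n-1}f(z)\}$ (with $P_0=0$), let $r_n=\|(1-P_n)\partial^n f\|>0$ and define the ''generalized Landau levels'' $u_n=(1-P_n)\partial^n f/r_n$. Define $h_N=|\langle u_N|\partial u_{N-1}\rangle|^2$ for $N\ge1$ and $h_0=0$. *)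

(* Defs.v *)
From Stdlib Require Import Reals ClassicalEpsilon.
From Coquelicot Require Import Coquelicot.
Open Scope R_scope.

Definition choose_or {V : Type} (P : V -> Prop) (d : V) : V :=
  match excluded_middle_informative (exists v, P v) with
  | left h => proj1_sig (constructive_indefinite_description P h)
  | right _ => d
  end.

Section Hilb.
Context {H : NormedModule C_AbsRing}.

(* complex Hilbert space structure: inner product antilinear in the first
   slot, linear in the second, Hermitian, inducing the norm; completeness is
   required through the type (CompleteNormedModule) in the theorem. *)
Definition is_inner_product (ip : H -> H -> C) : Prop :=
  (forall x y z, ip x (plus y z) = (ip x y + ip x z)%C) /\
  (forall (a : C) x y, ip x (scal a y) = (a * ip x y)%C) /\
  (forall x y, ip y x = Cconj (ip x y)) /\
  (forall x, norm x = sqrt (Re (ip x x))).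

Definition separable : Prop :=
  exists e : nat -> H, forall x (eps : R), 0 < eps ->
    exists n, norm (minus x (e n)) < eps.

(* complex derivative (total operator, 0 if it does not exist) *)
Definition cderiv (g : C -> H) (z : C) : H :=
  choose_or (fun l => @is_derive C_AbsRing H g z l) zero.

Definition holomorphic (g : C -> H) : Prop :=
  forall z, @ex_derive C_AbsRing H g z.

Fixpoint dn (g : C -> H) (n : nat) : C -> H :=
  match n with
  | O => g
  | S m => cderiv (dn g m)
  end.

(* real partial derivatives of g : C -> H in direction d (d = 1 : x, d = i : y) *)
Definition is_dir_deriv (g : C -> H) (z d : C) (v : H) : Prop :=
  filterlim (fun t : R => scal (RtoC (/ t)) (minus (g (z + RtoC t * d)%C) (g z)))
            (locally' 0) (locally v).

Definition is_wirt (g : C -> H) (z : C) (v : H) : Prop :=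
  exists vx vy, is_dir_deriv g z 1%C vx /\ is_dir_deriv g z Ci vy /\
    v = scal (RtoC (1/2)) (minus vx (scal Ci vy)).

Definition is_wirt_bar (g : C -> H) (z : C) (v : H) : Prop :=
  exists vx vy, is_dir_deriv g z 1%C vx /\ is_dir_deriv g z Ci vy /\
    v = scal (RtoC (1/2)) (plus vx (scal Ci vy)).

Definition wirt (g : C -> H) (z : C) : H := choose_or (is_wirt g z) zero.

Fixpoint lsum (g : nat -> H) (n : nat) : H :=
  match n with
  | O => zero
  | S m => plus (lsum g m) (g m)
  end.

Definition in_span (vs : nat -> H) (n : nat) (w : H) : Prop :=
  exists a : nat -> C, w = lsum (fun k => scal (a k) (vs k)) n.

Definition lin_indep (vs : nat -> H) (n : nat) : Prop :=
  forall a : nat -> C, lsum (fun k => scal (a k) (vs k)) n = zero ->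
    forall k, (k < n)%nat -> a k = 0%C.

Variable ip : H -> H -> C.

Definition orth_proj (vs : nat -> H) (n : nat) (v : H) : H :=
  choose_or (fun w => in_span vs n w /\
                      forall k, (k < n)%nat -> ip (vs k) (minus v w) = 0%C) zero.

Definition qn (f : C -> H) (n : nat) (z : C) : H :=
  minus (dn f n z) (orth_proj (fun k => dn f k z) n (dn f n z)).

Definition rn (f : C -> H) (n : nat) (z : C) : R := norm (qn f n z).

Definition un (f : C -> H) (n : nat) (z : C) : H :=
  scal (RtoC (/ rn f n z)) (qn f n z).

Definition hN (f : C -> H) (N : nat) (z : C) : R :=
  match N with
  | O => 0
  | S M => (Cmod (ip (un f (S M) z) (wirt (un f M) z))) ^ 2
  end.

Definition is_unitary (V : H -> H) : Prop :=
  (forall x y, V (plus x y) = plus (V x) (V y)) /\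
  (forall (a : C) x, V (scal a x) = scal a (V x)) /\
  (forall x y, ip (V x) (V y) = ip x y) /\
  (forall y, exists x, V x = y).

End Hilb.

Definition holomorphicC (c : C -> C) : Prop :=
  forall z, @ex_derive C_AbsRing C_NormedModule c z.

(* lattice generated by w1, w2 (R-linearly independent) *)
Definition lattice_basis (w1 w2 : C) : Prop :=
  Im (Cconj w1 * w2)%C <> 0.

Definition lattice_pt (w1 w2 : C) (m n : Z) : C :=
  (RtoC (IZR m) * w1 + RtoC (IZR n) * w2)%C.

(* Main.v *)
Require Import Defs.
From Stdlib Require Import Reals Lra Lia FunctionalExtensionality ClassicalEpsilon Arith.
From Coquelicot Require Import Coquelicot.
Open Scope R_scope.

Lemma choose_or_spec {V} (P : V -> Prop) d : (exists v, P v) -> P (choose_or P d).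
Proof. intros h. unfold choose_or. destruct excluded_middle_informative as [h'|h'].
  - apply proj2_sig. - contradiction. Qed.

Lemma choose_or_uniq {V} (P : V -> Prop) d v :
  P v -> (forall v', P v' -> v' = v) -> choose_or P d = v.
Proof. intros hv hu. apply hu, choose_or_spec. eauto. Qed.

Ltac ceq := apply injective_projections; simpl; try ring.

Lemma Cconj_plus (a b : C) : Cconj (a + b)%C = (Cconj a + Cconj b)%C.
Proof. ceq. Qed.
Lemma Cconj_mult (a b : C) : Cconj (a * b)%C = (Cconj a * Cconj b)%C.
Proof. ceq. Qed.
Lemma Cconj_inv (a b : C) : Cconj (Cconj a) = a.
Proof. ceq. Qed.

Lemma Cminus_eq (u v : C) : @minus C_AbelianGroup u v = (u - v)%C.
Proof. reflexivity. Qed.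
Lemma Cplus_eq (u v : C) : @plus C_AbelianGroup u v = (u + v)%C.
Proof. reflexivity. Qed.

Section IP.
Context {V : NormedModule C_AbsRing} (ip : V -> V -> C) (Hip : is_inner_product ip).

Let MV := NormedModule.ModuleSpace C_AbsRing V.
Lemma scal_opp_oneV (u : V) : scal (opp (one : C_AbsRing)) u = opp u.
Proof. exact (@scal_opp_one _ MV u). Qed.

Lemma ip_plus_r x y z : ip x (plus y z) = (ip x y + ip x z)%C.
Proof. apply Hip. Qed.
Lemma ip_scal_r (a : C) x y : ip x (scal a y) = (a * ip x y)%C.
Proof. apply Hip. Qed.
Lemma ip_conj x y : ip y x = Cconj (ip x y).
Proof. apply Hip. Qed.
Lemma ip_plus_l x y z : ip (plus x y) z = (ip x z + ip y z)%C.
Proof. rewrite ip_conj, ip_plus_r, Cconj_plus, <- !ip_conj. reflexivity. Qed.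
Lemma ip_scal_l (a : C) x y : ip (scal a x) y = (Cconj a * ip x y)%C.
Proof. rewrite ip_conj, ip_scal_r, Cconj_mult, <- !ip_conj. reflexivity. Qed.
Lemma ip_zero_r x : ip x zero = 0%C.
Proof. assert (E : (zero : V) = scal (RtoC 0) (zero : V)) by (symmetry; exact (@scal_zero_r _ (NormedModule.ModuleSpace C_AbsRing V) _)).
  rewrite E, ip_scal_r. ceq. Qed.
Lemma ip_zero_l x : ip zero x = 0%C.
Proof. rewrite ip_conj, ip_zero_r. ceq. Qed.
Lemma ip_opp_r x y : ip x (opp y) = (- ip x y)%C.
Proof. rewrite <- scal_opp_oneV, ip_scal_r. ceq. Qed.
Lemma ip_opp_l x y : ip (opp x) y = (- ip x y)%C.
Proof. rewrite <- scal_opp_oneV, ip_scal_l. ceq. Qed.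
Lemma ip_minus_r x y z : ip x (minus y z) = (ip x y - ip x z)%C.
Proof. unfold minus. rewrite ip_plus_r, ip_opp_r. reflexivity. Qed.
Lemma ip_minus_l x y z : ip (minus x y) z = (ip x z - ip y z)%C.
Proof. unfold minus. rewrite ip_plus_l, ip_opp_l. reflexivity. Qed.

Lemma ip_self x : ip x x = RtoC (norm x ^ 2).
Proof.
  assert (Him : snd (ip x x) = 0).
  { pose proof (ip_conj x x) as h. apply (f_equal snd) in h. simpl in h. lra. }
  assert (Hn : norm x = sqrt (fst (ip x x))) by apply Hip.
  destruct (Rle_lt_dec 0 (fst (ip x x))) as [hle|hlt].
  - apply injective_projections; simpl; [|lra]. rewrite Hn. simpl. rewrite Rmult_1_r, sqrt_sqrt; auto.
  - exfalso. rewrite sqrt_neg_0 in Hn by lra. apply norm_eq_zero in Hn. subst x.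
    rewrite ip_zero_r in hlt. simpl in hlt. lra.
Qed.

Lemma ip_self_eq0 x : ip x x = 0%C -> x = zero.
Proof. rewrite ip_self. intros h. apply (f_equal fst) in h. simpl in h.
  apply norm_eq_zero. nra. Qed.

Lemma Cmod_conj_sq (c : C) : Cmod c ^ 2 = fst c * fst c + snd c * snd c.
Proof. unfold Cmod. rewrite pow2_sqrt. simpl. ring. destruct c; simpl. nra. Qed.

Lemma cauchy_schwarz x y : Cmod (ip x y) <= norm x * norm y.
Proof.
  destruct (Req_dec (norm y) 0) as [h0|hne].
  - apply norm_eq_zero in h0. subst y. rewrite ip_zero_r, Cmod_0. rewrite norm_zero. lra.
  - pose proof (norm_ge_0 y) as hy. assert (hyp : 0 < norm y) by lra.
    set (b := norm y ^ 2). assert (hb : 0 < b) by (unfold b; nra).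
    set (a := ip y x).
    set (w := minus x (scal (a * RtoC (/ b))%C y)).
    assert (H0 : 0 <= fst (ip w w)) by (rewrite ip_self; simpl; nra).
    assert (E : ip w w = (RtoC (norm x ^ 2) - RtoC (Cmod a ^ 2 / b))%C).
    { unfold w. rewrite ip_minus_l, !ip_minus_r, !ip_scal_l, !ip_scal_r, !ip_self.
      fold b. rewrite (ip_conj y x). fold a. rewrite Cmod_conj_sq.
      destruct a as [a1 a2]. apply injective_projections; simpl; field; lra. }
    rewrite E in H0. simpl in H0.
    assert (Cmod a ^ 2 <= (norm x * norm y) ^ 2).
    { replace ((norm x * norm y)^2) with (norm x ^ 2 * b) by (unfold b; ring).
      assert (0 <= norm x ^ 2 - Cmod a ^ 2 / b) by lra.
      apply Rmult_le_compat_r with (r := b) in H; [|lra].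
      field_simplify in H; lra. }
    assert (Ea : Cmod (ip x y) = Cmod a) by (unfold a; rewrite (ip_conj x y), Cmod_conj; reflexivity).
    rewrite Ea. pose proof (Cmod_ge_0 a). pose proof (norm_ge_0 x).
    assert (0 <= norm x * norm y) by nra.
    destruct (Rle_lt_dec (Cmod a) (norm x * norm y)); auto.
    exfalso. assert (norm x * norm y * (norm x * norm y) < Cmod a * Cmod a) by nra. nra.
Qed.

Lemma ip_diff a b x y :
  ip a b = (ip x y + ip (minus a x) b + ip x (minus b y))%C.
Proof. rewrite ip_minus_l, ip_minus_r. ring. Qed.

Lemma filterlim_ip {T} {F : (T -> Prop) -> Prop} {FF : Filter F} (f1 f2 : T -> V) x y :
  filterlim f1 F (locally x) -> filterlim f2 F (locally y) ->
  filterlim (fun t => ip (f1 t) (f2 t)) F (locally (ip x y)).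
Proof.
  intros h1 h2.
  apply (filterlim_locally_ball_norm (U := C_NormedModule)). intros eps.
  set (M := norm x + norm y + 1).
  assert (HM : 0 < M) by (unfold M; pose proof (norm_ge_0 x); pose proof (norm_ge_0 y); lra).
  assert (hd : 0 < Rmin 1 (eps / (2 * M))).
  { apply Rmin_pos; [lra|]. apply Rdiv_lt_0_compat; [apply cond_pos| lra]. }
  set (d := mkposreal _ hd).
  apply (proj1 (filterlim_locally_ball_norm _ _)) with (eps := d) in h1.
  apply (proj1 (filterlim_locally_ball_norm _ _)) with (eps := d) in h2.
  generalize (filter_and _ _ h1 h2). apply filter_imp. intros t [ha hb].
  unfold ball_norm in *.
  assert (hd1 : d <= 1) by (simpl; apply Rmin_l).
  assert (hd2 : d <= eps / (2 * M)) by (simpl; apply Rmin_r).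
  set (a := f1 t) in *. set (b := f2 t) in *.
  assert (hbn : norm b <= norm y + 1).
  { pose proof (norm_triangle_inv b y). apply Rabs_le_between in H. lra. }
  change (Cmod (@minus C_AbelianGroup (ip a b) (ip x y)) < eps).
  rewrite Cminus_eq, (ip_diff a b x y).
  replace (ip x y + ip (minus a x) b + ip x (minus b y) - ip x y)%C
    with (ip (minus a x) b + ip x (minus b y))%C by ring.
  eapply Rle_lt_trans. apply Cmod_triangle.
  pose proof (cauchy_schwarz (minus a x) b). pose proof (cauchy_schwarz x (minus b y)).
  pose proof (norm_ge_0 x). pose proof (norm_ge_0 b). pose proof (norm_ge_0 (minus a x)).
  pose proof (norm_ge_0 (minus b y)).
  assert (norm (minus a x) * norm b <= d * (norm y + 1)).
  { apply Rmult_le_compat; lra. }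
  assert (norm x * norm (minus b y) <= norm x * d) by (apply Rmult_le_compat_l; lra).
  assert (d * M <= eps / 2).
  { apply Rmult_le_compat_r with (r := M) in hd2; [|lra].
    replace (eps / (2 * M) * M) with (eps / 2) in hd2 by (field; lra). lra. }
  pose proof (cond_pos eps). unfold M in *. lra.
Qed.
End IP.

Definition ipC (x y : C_NormedModule) : C := (Cconj x * y)%C.

Lemma ipC_ok : @is_inner_product C_NormedModule ipC.
Proof.
  unfold ipC. split; [|split; [|split]].
  - intros x y z. change (plus y z) with (y + z)%C. ring.
  - intros a x y. change (scal a y) with (a * y)%C. ring.
  - intros x y. destruct x, y. ceq.
  - intros x. change (norm x) with (Cmod x). unfold Cmod. destruct x. simpl. f_equal. ring.
Qed.

Lemma scalC (a b : C) : @scal C_Ring (NormedModule.ModuleSpace C_AbsRing C_NormedModule) a b = (a * b)%C.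
Proof. reflexivity. Qed.
Lemma minusC (a b : C) : @minus (NormedModule.AbelianGroup C_AbsRing C_NormedModule) a b = (a - b)%C.
Proof. reflexivity. Qed.
Lemma plusC (a b : C) : @plus (NormedModule.AbelianGroup C_AbsRing C_NormedModule) a b = (a + b)%C.
Proof. reflexivity. Qed.
Lemma zeroC : @zero (NormedModule.AbelianGroup C_AbsRing C_NormedModule) = RtoC 0.
Proof. reflexivity. Qed.

Lemma locally'0_proper : ProperFilter (locally' (0:R)).
Proof. exact (Rbar_locally'_filter 0). Qed.
Lemma locally'0_filter : Filter (locally' (0:R)).
Proof. apply locally'_filter. Qed.

Lemma filterlim_RtoC : filterlim (fun t : R => RtoC t) (locally' 0) (locally (RtoC 0)).
Proof.
  apply filterlim_locally. intros eps. exists eps. intros y hy _.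
  split; [exact hy| apply ball_center].
Qed.

Lemma filterlim_RtoC_abs : filterlim (fun t : R => (RtoC t : C_AbsRing)) (locally' 0)
  (@locally (AbsRing_UniformSpace C_AbsRing) (RtoC 0)).
Proof.
  apply filterlim_locally. intros eps. exists eps. intros y hy _.
  change (Cmod (RtoC y - RtoC 0)%C < eps). rewrite <- RtoC_minus, Cmod_R. exact hy.
Qed.

Ltac rw_by T R pf := let h := fresh in assert (h : T = R) by (exact pf); rewrite h; clear h.

Ltac cnorm := repeat match goal with
 | |- context [?T] =>
   match T with
   | @scal _ _ ?a ?b => rw_by T (a * b)%C (eq_refl (a * b)%C)
   | @minus _ ?a ?b => rw_by T (a - b)%C (eq_refl (a - b)%C)
   | @plus _ ?a ?b => rw_by T (a + b)%C (eq_refl (a + b)%C)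
   | @opp _ ?a => rw_by T (- a)%C (eq_refl (- a)%C)
   | @zero _ => rw_by T (RtoC 0) (eq_refl (RtoC 0))
   end
 end; try match goal with |- ?a = ?b => change (@eq C a b) end.

Lemma C_to_abs {T} {F : (T -> Prop) -> Prop} {FF : Filter F} (f : T -> C) (l : C) :
  filterlim f F (@locally C_NormedModule l) -> filterlim f F (@locally (AbsRing_UniformSpace C_AbsRing) l).
Proof.
  intros h. apply (filterlim_locally_ball_norm (U := AbsRing_NormedModule C_AbsRing)).
  intros eps. apply (proj1 (filterlim_locally_ball_norm (U := C_NormedModule) _ _) h eps).
Qed.

Lemma Cconj_RtoC (x : R) : Cconj (RtoC x) = RtoC x.
Proof. ceq. Qed.

Definition dq {V : NormedModule C_AbsRing} (g : C -> V) z d (t : R) : V :=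
  scal (RtoC (/ t)) (minus (g (z + RtoC t * d)%C) (g z)).

Section Calc.
Context {V : NormedModule C_AbsRing} (ip : V -> V -> C) (Hip : is_inner_product ip).

Lemma ext_ip (x y : V) : (forall e, ip e x = ip e y) -> x = y.
Proof.
  intros h. assert (E : ip (minus x y) (minus x y) = RtoC 0).
  { rewrite (ip_minus_r ip Hip), !h. ceq. }
  apply (ip_self_eq0 ip Hip) in E.
  set (G := NormedModule.AbelianGroup C_AbsRing V).
  assert (E2 : @plus G (@minus G x y) y = x).
  { unfold minus. rewrite <- (@plus_assoc G), (@plus_opp_l G), (@plus_zero_r G). reflexivity. }
  assert (E' : @minus G x y = @zero G) by exact E.
  rewrite E' in E2. rewrite (@plus_zero_l G) in E2. symmetry. exact E2.
Qed.

Ltac ipn := repeat match goal with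
 | |- context [ip ?e ?X] =>
   match X with
   | plus ?a ?b => rw_by (ip e X) (ip e a + ip e b)%C (ip_plus_r ip Hip e a b)
   | minus ?a ?b => rw_by (ip e X) (ip e a - ip e b)%C (ip_minus_r ip Hip e a b)
   | opp ?a => rw_by (ip e X) (- ip e a)%C (ip_opp_r ip Hip e a)
   | scal ?k ?a => rw_by (ip e X) (k * ip e a)%C (ip_scal_r ip Hip k e a)
   | zero => rw_by (ip e X) (RtoC 0) (ip_zero_r ip Hip e)
   end
 end.

Ltac vext := apply ext_ip; intro e; ipn; try ring.


Lemma dd_unique (g : C -> V) z d (v1 v2 : V) : is_dir_deriv g z d v1 -> is_dir_deriv g z d v2 -> v1 = v2.
Proof.
  intros h1 h2. pose proof locally'0_proper as P.
  exact (filterlim_locally_unique (F := locally' (0:R)) _ _ _ h1 h2).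
Qed.

Lemma dd_const (c : V) z d : is_dir_deriv (fun _ : C => c) z d zero.
Proof.
  unfold is_dir_deriv. pose proof locally'0_filter.
  apply filterlim_ext with (f := fun _ => zero). intros t. vext.
  apply filterlim_const.
Qed.

Lemma dd_plus (g1 g2 : C -> V) z d (v1 v2 : V) : is_dir_deriv g1 z d v1 -> is_dir_deriv g2 z d v2 ->
  is_dir_deriv (fun w => plus (g1 w) (g2 w)) z d (plus v1 v2).
Proof.
  intros h1 h2. pose proof locally'0_filter. unfold is_dir_deriv.
  apply filterlim_ext with (f := fun t => plus (dq g1 z d t) (dq g2 z d t)).
  { intros t. unfold dq. vext. }
  exact (filterlim_comp_2 _ _ _ h1 h2 (filterlim_plus _ _)).
Qed.

Lemma dd_opp (g : C -> V) z d (v : V) : is_dir_deriv g z d v -> is_dir_deriv (fun w => opp (g w)) z d (opp v).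
Proof.
  intros h. pose proof locally'0_filter. unfold is_dir_deriv.
  apply filterlim_ext with (f := fun t => opp (dq g z d t)).
  { intros t. unfold dq. vext. }
  eapply filterlim_comp; [exact h| apply filterlim_opp].
Qed.

Lemma dd_minus (g1 g2 : C -> V) z d (v1 v2 : V) : is_dir_deriv g1 z d v1 -> is_dir_deriv g2 z d v2 ->
  is_dir_deriv (fun w => minus (g1 w) (g2 w)) z d (minus v1 v2).
Proof. intros h1 h2. apply dd_plus; [exact h1| apply dd_opp; exact h2]. Qed.

Lemma dd_cont (g : C -> V) z d (v : V) : is_dir_deriv g z d v ->
  filterlim (fun t => g (z + RtoC t * d)%C) (locally' 0) (locally (g z)).
Proof.
  intros h. pose proof locally'0_filter.
  apply filterlim_ext_loc with (f := fun t => plus (g z) (scal (RtoC t) (dq g z d t))).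
  { exists (mkposreal 1 Rlt_0_1). intros t _ ht. unfold dq. vext.
    assert (E1 : (RtoC t * RtoC (/t))%C = RtoC 1) by (rewrite <- RtoC_mult, Rinv_r; auto).
    rewrite Cmult_assoc, E1. ring. }
  assert (L := filterlim_comp_2 _ _ _ (filterlim_const (g z))
          (filterlim_comp_2 _ _ _ filterlim_RtoC_abs h (filterlim_scal _ _)) (filterlim_plus _ _)).
  match type of L with filterlim _ _ (locally ?X) =>
    let E := fresh in assert (E : X = g z) by vext; rewrite E in L end. exact L.
Qed.

Lemma ip_scal_l' (a : C) x y : ip (scal a x) y = (Cconj a * ip x y)%C.
Proof. apply (ip_scal_l ip Hip). Qed.

Ltac ipnl := repeat match goal with
 | |- context [ip ?X ?y] =>
   match X with
   | plus ?a ?b => rw_by (ip X y) (ip a y + ip b y)%C (ip_plus_l ip Hip a b y)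
   | minus ?a ?b => rw_by (ip X y) (ip a y - ip b y)%C (ip_minus_l ip Hip a b y)
   | opp ?a => rw_by (ip X y) (- ip a y)%C (ip_opp_l ip Hip a y)
   | scal ?k ?a => rw_by (ip X y) (Cconj k * ip a y)%C (ip_scal_l ip Hip k a y)
   | zero => rw_by (ip X y) (RtoC 0) (ip_zero_l ip Hip y)
   end
 end.

Lemma dd_scal_fun (a : C -> C) (g : C -> V) z d (al : C) (v : V) :
  @is_dir_deriv C_NormedModule a z d al -> is_dir_deriv g z d v ->
  is_dir_deriv (fun w => scal (a w) (g w)) z d (plus (scal al (g z)) (scal (a z) v)).
Proof.
  intros ha hg. pose proof locally'0_filter. unfold is_dir_deriv.
  apply filterlim_ext with (f := fun t => plus (scal (@dq C_NormedModule a z d t) (g (z + RtoC t * d)%C)) (scal (a z) (dq g z d t))).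
  { intros t. unfold dq. vext. cnorm. ring. }
  apply (filterlim_comp_2 _ _ _ (filterlim_comp_2 _ _ _ (C_to_abs _ _ ha) (dd_cont g z d v hg) (filterlim_scal _ _))
     (filterlim_comp_2 _ _ _ (filterlim_const (U := AbsRing_UniformSpace C_AbsRing) (a z)) hg (filterlim_scal _ _)) (filterlim_plus _ _)).
Qed.

Lemma dd_ip (A B : C -> V) z d (vA vB : V) :
  is_dir_deriv A z d vA -> is_dir_deriv B z d vB ->
  @is_dir_deriv C_NormedModule (fun w => ip (A w) (B w)) z d (ip vA (B z) + ip (A z) vB)%C.
Proof.
  intros hA hB. pose proof locally'0_filter. unfold is_dir_deriv.
  apply filterlim_ext with (f := fun t => (ip (dq A z d t) (B (z + RtoC t * d)%C) + ip (A z) (dq B z d t))%C).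
  { intros t. unfold dq. ipnl. ipn. rewrite Cconj_RtoC. cnorm. ring. }
  apply (filterlim_comp_2 (G := @locally C_NormedModule (ip vA (B z))) (H := @locally C_NormedModule (ip (A z) vB)) _ _ _
    (filterlim_ip ip Hip _ _ _ _ hA (dd_cont B z d vB hB))
    (filterlim_ip ip Hip _ _ _ _ (filterlim_const (A z)) hB) (filterlim_plus (V := C_NormedModule) _ _)).
Qed.

Lemma dd_lsum (F : nat -> C -> V) z d (v : nat -> V) n :
  (forall k, (k < n)%nat -> is_dir_deriv (F k) z d (v k)) ->
  is_dir_deriv (fun w => lsum (fun k => F k w) n) z d (lsum v n).
Proof.
  induction n; intros h; simpl.
  - apply dd_const.
  - apply dd_plus. apply IHn; intros; apply h; lia. apply h; lia.
Qed.

Lemma dd_holo (g : C -> V) (z d : C) (l : V) : d <> RtoC 0 -> is_derive g z l -> is_dir_deriv g z d (scal d l).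
Proof.
  intros hd [_ Hd]. specialize (Hd z (fun P hP => hP)).
  pose proof locally'0_filter. unfold is_dir_deriv.
  apply (filterlim_locally_ball_norm (U := V)). intros eps.
  set (md := Cmod d). assert (hmd : 0 < md) by (apply Cmod_gt_0; auto).
  assert (he' : 0 < eps / (2 * md)) by (apply Rdiv_lt_0_compat; [apply cond_pos | lra]).
  destruct (Hd (mkposreal _ he')) as [del Hdel].
  assert (hdel' : 0 < del / md) by (apply Rdiv_lt_0_compat; [apply cond_pos | lra]).
  exists (mkposreal _ hdel'). intros t ht t0. simpl in ht.
  change (Rabs (t - 0) < del / md) in ht. rewrite Rminus_0_r in ht.
  set (y := (z + RtoC t * d)%C).
  assert (hyz : Cmod (y - z)%C = Rabs t * md).
  { unfold y. replace (z + RtoC t * d - z)%C with (RtoC t * d)%C by ring.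
    rewrite Cmod_mult, Cmod_R. reflexivity. }
  specialize (Hdel y). match type of Hdel with ?P -> _ => assert (hy : P) end.
  { change (Cmod (y - z)%C < del). rewrite hyz.
    apply Rmult_lt_compat_r with (r := md) in ht; [|lra].
    replace (del / md * md) with (pos del) in ht by (field; lra). lra. }
  specialize (Hdel hy). simpl in Hdel.
  match type of Hdel with _ <= _ * ?X =>
    let h := fresh in assert (h : X = Rabs t * md) by exact hyz; rewrite h in Hdel end.
  unfold ball_norm.
  match goal with |- norm ?X < _ =>
  assert (E : X = scal (RtoC (/ t)) (minus (minus (g y) (g z)) (scal (minus y z) l)));
  [| rewrite E] end.
  { unfold dq. fold y. vext. cnorm. unfold y. rewrite RtoC_inv by exact t0.
    field. intro h. apply t0. apply (f_equal fst) in h. exact h. } eapply Rle_lt_trans. apply (norm_scal (K := C_AbsRing) (V := V)).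
  change (abs (RtoC (/ t))) with (Cmod (RtoC (/ t))). rewrite Cmod_R.
  assert (ht' : 0 < Rabs t) by (apply Rabs_pos_lt; exact t0).
  rewrite Rabs_inv.
  apply Rle_lt_trans with (/ Rabs t * (eps / (2 * md) * (Rabs t * md))).
  { apply Rmult_le_compat_l; [left; apply Rinv_0_lt_compat; lra| exact Hdel]. }
  replace (/ Rabs t * (eps / (2 * md) * (Rabs t * md))) with (eps / 2) by (field; lra).
  pose proof (cond_pos eps). lra.
Qed.

End Calc.

Lemma ballR (x d t : R) : ball x d t <-> Rabs (t - x) < d.
Proof. reflexivity. Qed.
Lemma ballC (x : C) d (t : C) : @ball C_UniformSpace x d t <-> ball (fst x) d (fst t) /\ ball (snd x) d (snd t).
Proof. destruct x, t. reflexivity. Qed.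

Lemma small_zero (a : R) : (forall eps : posreal, Rabs (0 - a) < eps) -> a = 0.
Proof.
  intros h. destruct (Req_dec a 0) as [|hn]; auto. exfalso.
  assert (hp : 0 < Rabs a) by (apply Rabs_pos_lt; auto).
  specialize (h (mkposreal _ hp)). simpl in h. rewrite Rminus_0_l, Rabs_Ropp in h. lra.
Qed.

Lemma dd_real_fst (s : C -> R) z d (v : C) :
  @is_dir_deriv C_NormedModule (fun w => RtoC (s w)) z d v ->
  snd v = 0 /\ filterlim (fun t => / t * (s (z + RtoC t * d)%C - s z)) (locally' 0) (locally (fst v)).
Proof.
  intros h. unfold is_dir_deriv in h. pose proof locally'0_proper as P.
  assert (h' : filterlim (fun t => RtoC (/ t * (s (z + RtoC t * d)%C - s z))) (locally' 0) (locally v)).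
  { eapply filterlim_ext; [|exact h]. intros t. simpl. cnorm. ceq. }
  rewrite filterlim_locally in h'. split.
  - apply small_zero. intros eps. destruct (filter_ex _ (h' eps)) as [t ht].
    apply ballC in ht. destruct ht as [_ ht]. exact ht.
  - apply filterlim_locally. intros eps. eapply filter_imp; [|exact (h' eps)].
    intros t ht. apply ballC in ht. apply ht.
Qed.

Lemma dd_real_of (s : C -> R) z d (l : R) :
  filterlim (fun t => / t * (s (z + RtoC t * d)%C - s z)) (locally' 0) (locally l) ->
  @is_dir_deriv C_NormedModule (fun w => RtoC (s w)) z d (RtoC l).
Proof.
  intros h. unfold is_dir_deriv. pose proof locally'0_filter.
  apply filterlim_ext with (f := fun t => RtoC (/ t * (s (z + RtoC t * d)%C - s z))).
  { intros t. simpl. cnorm. ceq. }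
  apply filterlim_locally. intros eps. rewrite filterlim_locally in h.
  eapply filter_imp; [|exact (h eps)]. intros t ht. apply ballC. split; [exact ht| apply ball_center].
Qed.

Lemma deriv_to_lim (f : R -> R) l : is_derive f 0 l ->
  filterlim (fun t => / t * (f t - f 0)) (locally' 0) (locally l).
Proof.
  intros h. apply is_derive_Reals in h. apply filterlim_locally. intros eps.
  destruct (h eps (cond_pos eps)) as [del hd]. exists del. intros t ht t0.
  change (Rabs (t - 0) < del) in ht. apply ballR. rewrite Rminus_0_r in ht.
  specialize (hd t t0 ht). rewrite Rplus_0_l in hd.
  replace (/ t * (f t - f 0)) with ((f t - f 0) / t) by (field; auto). exact hd.
Qed.

Lemma lim_to_deriv (f : R -> R) l :
  filterlim (fun t => / t * (f t - f 0)) (locally' 0) (locally l) -> is_derive f 0 l.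
Proof.
  intros h. apply is_derive_Reals. intros eps heps. rewrite filterlim_locally in h.
  destruct (h (mkposreal _ heps)) as [del hd]. exists del. intros t t0 ht.
  rewrite Rplus_0_l. specialize (hd t). rewrite ballR, Rminus_0_r in hd.
  specialize (hd ht t0). apply ballR in hd.
  replace ((f t - f 0) / t) with (/ t * (f t - f 0)) by (field; auto). exact hd.
Qed.

Lemma rq_chain (sg : R -> R) s0 (phi : R -> R) dphi l :
  filterlim (fun t => / t * (sg t - s0)) (locally' 0) (locally l) -> is_derive phi s0 dphi ->
  filterlim (fun t => / t * (phi (sg t) - phi s0)) (locally' 0) (locally (dphi * l)).
Proof.
  intros h hp. pose proof locally'0_filter.
  set (sg' := fun t => if Req_EM_T t 0 then s0 else sg t).
  assert (E0 : sg' 0 = s0) by (unfold sg'; destruct Req_EM_T; [reflexivity|lra]).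
  assert (h1 : is_derive sg' 0 l).
  { apply lim_to_deriv. rewrite E0. eapply filterlim_ext_loc; [|exact h].
    exists (mkposreal 1 Rlt_0_1). intros t _ t0. unfold sg'. destruct Req_EM_T; [contradiction|reflexivity]. }
  rewrite <- E0 in hp.
  pose proof (is_derive_comp phi sg' 0 dphi l hp h1) as hc.
  apply deriv_to_lim in hc. rewrite E0 in hc.
  replace (dphi * l) with (scal l dphi) by (unfold scal; simpl; unfold mult; simpl; ring).
  eapply filterlim_ext_loc; [|exact hc].
  exists (mkposreal 1 Rlt_0_1). intros t _ t0. unfold sg'. destruct Req_EM_T; [contradiction|reflexivity].
Qed.

Lemma dd_chain (s : C -> R) (phi : R -> R) z d (v : C) dphi :
  @is_dir_deriv C_NormedModule (fun w => RtoC (s w)) z d v -> is_derive phi (s z) dphi ->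
  @is_dir_deriv C_NormedModule (fun w => RtoC (phi (s w))) z d (RtoC dphi * v)%C.
Proof.
  intros h hp. destruct (dd_real_fst s z d v h) as [hv hl].
  pose proof (rq_chain _ _ phi dphi _ hl hp) as hc.
  replace (RtoC dphi * v)%C with (RtoC (dphi * fst v)).
  - apply (dd_real_of (fun w => phi (s w))). exact hc.
  - destruct v as [v1 v2]. simpl in hv. subst v2. ceq.
Qed.

Lemma dd_conj (a : C -> C) z d (al : C) :
  @is_dir_deriv C_NormedModule a z d al ->
  @is_dir_deriv C_NormedModule (fun w => Cconj (a w)) z d (Cconj al).
Proof.
  intros h. unfold is_dir_deriv in *. pose proof locally'0_filter.
  apply filterlim_ext with (f := fun t => Cconj (@dq C_NormedModule a z d t)).
  { intros t. unfold dq. cnorm. ceq. }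
  pose proof (proj1 (filterlim_locally _ _) h) as h'. apply filterlim_locally. intros eps.
  eapply filter_imp; [|exact (h' eps)]. intros t ht.
  apply ballC in ht. apply ballC. destruct ht as [h1 h2]. split.
  - exact h1.
  - change (Rabs (snd (dq a z d t) - snd al) < eps) in h2.
    change (Rabs (- snd (dq a z d t) - - snd al) < eps).
    replace (- snd (dq a z d t) - - snd al) with (- (snd (dq a z d t) - snd al)) by ring.
    rewrite Rabs_Ropp. exact h2.
Qed.

Definition W {V : NormedModule C_AbsRing} (g : C -> V) z (w wb : V) :=
  is_dir_deriv g z (RtoC 1) (plus w wb) /\ is_dir_deriv g z Ci (scal Ci (minus w wb)).

Lemma Cconj_Ci : Cconj Ci = (- Ci)%C.
Proof. ceq. Qed.

Ltac csolve := repeat (match goal with |- context [?T] =>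
   match type of T with C => lazymatch T with
     | (_, _) => fail
     | _ => is_var T; fail
     | _ => match T with
            | Cplus _ _ => fail | Cmult _ _ => fail | Copp _ => fail | Cminus _ _ => fail
            | Cconj _ => fail | RtoC _ => fail | Ci => fail | Cinv _ => fail | Cdiv _ _ => fail
            | _ => generalize T; intro end end end end);
  repeat match goal with c : C |- _ => destruct c end;
  apply injective_projections; simpl; field.

Lemma dd_eq {V : NormedModule C_AbsRing} (g : C -> V) z d v v' :
  is_dir_deriv g z d v -> v = v' -> is_dir_deriv g z d v'.
Proof. intros h <-. exact h. Qed.

Section WS.
Context {V : NormedModule C_AbsRing} (ip : V -> V -> C) (Hip : is_inner_product ip).

Ltac ipn := repeat match goal with
 | |- context [ip ?e ?X] =>
   match X with
   | plus ?a ?b => rw_by (ip e X) (ip e a + ip e b)%C (ip_plus_r ip Hip e a b)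
   | minus ?a ?b => rw_by (ip e X) (ip e a - ip e b)%C (ip_minus_r ip Hip e a b)
   | opp ?a => rw_by (ip e X) (- ip e a)%C (ip_opp_r ip Hip e a)
   | scal ?k ?a => rw_by (ip e X) (k * ip e a)%C (ip_scal_r ip Hip k e a)
   | zero => rw_by (ip e X) (RtoC 0) (ip_zero_r ip Hip e)
   end
 end.
Ltac ipnl := repeat match goal with
 | |- context [ip ?X ?y] =>
   match X with
   | plus ?a ?b => rw_by (ip X y) (ip a y + ip b y)%C (ip_plus_l ip Hip a b y)
   | minus ?a ?b => rw_by (ip X y) (ip a y - ip b y)%C (ip_minus_l ip Hip a b y)
   | opp ?a => rw_by (ip X y) (- ip a y)%C (ip_opp_l ip Hip a y)
   | scal ?k ?a => rw_by (ip X y) (Cconj k * ip a y)%C (ip_scal_l ip Hip k a y)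
   | zero => rw_by (ip X y) (RtoC 0) (ip_zero_l ip Hip y)
   end
 end.
Ltac vext := apply (ext_ip ip Hip); intro e; ipn; try ring.

Lemma W_unique (g : C -> V) z w wb w' wb' : W g z w wb -> W g z w' wb' -> w = w' /\ wb = wb'.
Proof.
  intros [h1 h2] [h1' h2'].
  pose proof (dd_unique g z _ _ _ h1 h1') as E1. pose proof (dd_unique g z _ _ _ h2 h2') as E2.
  split; apply (ext_ip ip Hip); intro e;
  apply (f_equal (ip e)) in E1; apply (f_equal (ip e)) in E2; revert E1 E2; ipn;
  generalize (ip e w) (ip e wb) (ip e w') (ip e wb'); intros a b a' b' E1 E2;
  destruct a, b, a', b'; apply (f_equal fst) in E1 as F1; apply (f_equal snd) in E1 as F2;
  apply (f_equal fst) in E2 as F3; apply (f_equal snd) in E2 as F4; simpl in *; apply injective_projections; simpl; lra.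
Qed.

Lemma W_wirt (g : C -> V) z w wb : W g z w wb -> is_wirt g z w /\ is_wirt_bar g z wb.
Proof.
  intros [h1 h2]. split.
  - exists (plus w wb), (scal Ci (minus w wb)). split; [exact h1|split; [exact h2|]]. vext. csolve.
  - exists (plus w wb), (scal Ci (minus w wb)). split; [exact h1|split; [exact h2|]]. vext. csolve.
Qed.

Lemma W_wirt_eq (g : C -> V) z w wb : W g z w wb -> wirt g z = w.
Proof.
  intros h. unfold wirt. apply choose_or_uniq. apply (W_wirt _ _ _ _ h).
  intros v [vx [vy [h1 [h2 ->]]]]. destruct h as [k1 k2].
  pose proof (dd_unique g z _ _ _ h1 k1) as ->. pose proof (dd_unique g z _ _ _ h2 k2) as ->.
  vext. csolve.
Qed.

Lemma W_const (c : V) z : W (fun _ => c) z zero zero.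
Proof. split; eapply dd_eq; try apply (dd_const ip Hip); vext. Qed.

Lemma W_plus (g1 g2 : C -> V) z w1 wb1 w2 wb2 : W g1 z w1 wb1 -> W g2 z w2 wb2 ->
  W (fun x => plus (g1 x) (g2 x)) z (plus w1 w2) (plus wb1 wb2).
Proof.
  intros [a1 a2] [b1 b2]. split; eapply dd_eq.
  apply (dd_plus ip Hip _ _ _ _ _ _ a1 b1). vext.
  apply (dd_plus ip Hip _ _ _ _ _ _ a2 b2). vext.
Qed.

Lemma W_minus (g1 g2 : C -> V) z w1 wb1 w2 wb2 : W g1 z w1 wb1 -> W g2 z w2 wb2 ->
  W (fun x => minus (g1 x) (g2 x)) z (minus w1 w2) (minus wb1 wb2).
Proof.
  intros [a1 a2] [b1 b2]. split; eapply dd_eq.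
  apply (dd_minus ip Hip _ _ _ _ _ _ a1 b1). vext.
  apply (dd_minus ip Hip _ _ _ _ _ _ a2 b2). vext.
Qed.

Lemma W_scal_fun (a : C -> C) (g : C -> V) z al alb w wb :
  @W C_NormedModule a z al alb -> W g z w wb ->
  W (fun x => scal (a x) (g x)) z (plus (scal al (g z)) (scal (a z) w)) (plus (scal alb (g z)) (scal (a z) wb)).
Proof.
  intros [a1 a2] [b1 b2]. split; eapply dd_eq.
  apply (dd_scal_fun ip Hip _ _ _ _ _ _ a1 b1). vext. cnorm. ring.
  apply (dd_scal_fun ip Hip _ _ _ _ _ _ a2 b2). vext. cnorm. ring.
Qed.

Lemma W_ip (A B : C -> V) z wA wbA wB wbB : W A z wA wbA -> W B z wB wbB ->
  @W C_NormedModule (fun x => ip (A x) (B x)) z (ip wbA (B z) + ip (A z) wB)%C (ip wA (B z) + ip (A z) wbB)%C.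
Proof.
  intros [a1 a2] [b1 b2]. split; eapply dd_eq.
  apply (dd_ip ip Hip _ _ _ _ _ _ a1 b1). ipnl. ipn. cnorm. ring.
  apply (dd_ip ip Hip _ _ _ _ _ _ a2 b2). ipnl. ipn. cnorm. rewrite Cconj_Ci. ring.
Qed.

Lemma W_lsum (F : nat -> C -> V) z (w wb : nat -> V) n :
  (forall k, (k < n)%nat -> W (F k) z (w k) (wb k)) ->
  W (fun x => lsum (fun k => F k x) n) z (lsum w n) (lsum wb n).
Proof.
  induction n; intros h; simpl.
  - apply W_const.
  - apply W_plus. apply IHn; intros; apply h; lia. apply h; lia.
Qed.

Lemma W_holo (g : C -> V) z l : is_derive g z l -> W g z l zero.
Proof.
  intros h. split; eapply dd_eq.
  apply (dd_holo ip Hip); [intro E; apply (f_equal fst) in E; simpl in E; lra| exact h]. vext.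
  apply (dd_holo ip Hip); [intro E; apply (f_equal snd) in E; simpl in E; lra| exact h]. vext.
Qed.

End WS.

Lemma W_conj (a : C -> C) z al alb : @W C_NormedModule a z al alb ->
  @W C_NormedModule (fun x => Cconj (a x)) z (Cconj alb) (Cconj al).
Proof.
  intros [a1 a2]. split; eapply dd_eq.
  apply (dd_conj _ _ _ _ a1). cnorm. csolve.
  apply (dd_conj _ _ _ _ a2). cnorm. csolve.
Qed.

Lemma W_chain (s : C -> R) (phi : R -> R) z al alb dphi :
  @W C_NormedModule (fun x => RtoC (s x)) z al alb -> is_derive phi (s z) dphi ->
  @W C_NormedModule (fun x => RtoC (phi (s x))) z (RtoC dphi * al)%C (RtoC dphi * alb)%C.
Proof.
  intros [a1 a2] hp. split; eapply dd_eq.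
  apply (dd_chain _ _ _ _ _ _ a1 hp). cnorm. ring.
  apply (dd_chain _ _ _ _ _ _ a2 hp). cnorm. ring.
Qed.

Lemma W_mult (a b : C -> C) z al alb be beb : @W C_NormedModule a z al alb -> @W C_NormedModule b z be beb ->
  @W C_NormedModule (fun x => a x * b x)%C z (al * b z + a z * be)%C (alb * b z + a z * beb)%C.
Proof.
  intros ha hb. pose proof (W_scal_fun ipC ipC_ok a b z al alb be beb ha hb) as h.
  exact h.
Qed.

Lemma W_constC (c : C) z : @W C_NormedModule (fun _ => c) z (RtoC 0) (RtoC 0).
Proof. apply (W_const ipC ipC_ok). Qed.

Lemma W_plusC (a b : C -> C) z al alb be beb : @W C_NormedModule a z al alb -> @W C_NormedModule b z be beb ->
  @W C_NormedModule (fun x => a x + b x)%C z (al + be)%C (alb + beb)%C.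
Proof. intros ha hb. exact (W_plus ipC ipC_ok _ _ _ _ _ _ _ ha hb). Qed.

Lemma W_minusC (a b : C -> C) z al alb be beb : @W C_NormedModule a z al alb -> @W C_NormedModule b z be beb ->
  @W C_NormedModule (fun x => a x - b x)%C z (al - be)%C (alb - beb)%C.
Proof. intros ha hb. exact (W_minus ipC ipC_ok _ _ _ _ _ _ _ ha hb). Qed.

Lemma W_ext {V : NormedModule C_AbsRing} (f g : C -> V) z w wb : (forall x, f x = g x) -> W f z w wb -> W g z w wb.
Proof. intros h. replace g with f by (apply functional_extensionality; exact h). auto. Qed.

Lemma W_val {V : NormedModule C_AbsRing} (f : C -> V) z w wb w' wb' : W f z w wb -> w = w' -> wb = wb' -> W f z w' wb'.
Proof. intros h <- <-. exact h. Qed.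

Lemma lsumC_zero (F : nat -> C) n : (forall k, (k < n)%nat -> F k = RtoC 0) -> @lsum C_NormedModule F n = RtoC 0.
Proof. induction n; intros h; simpl; auto. rewrite IHn by (intros; apply h; lia). rewrite h by lia. cnorm. ring. Qed.

Section Span.
Context {V : NormedModule C_AbsRing} (ip : V -> V -> C) (Hip : is_inner_product ip).

Ltac ipn := repeat match goal with
 | |- context [ip ?e ?X] =>
   match X with
   | plus ?a ?b => rw_by (ip e X) (ip e a + ip e b)%C (ip_plus_r ip Hip e a b)
   | minus ?a ?b => rw_by (ip e X) (ip e a - ip e b)%C (ip_minus_r ip Hip e a b)
   | opp ?a => rw_by (ip e X) (- ip e a)%C (ip_opp_r ip Hip e a)
   | scal ?k ?a => rw_by (ip e X) (k * ip e a)%C (ip_scal_r ip Hip k e a)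
   | zero => rw_by (ip e X) (RtoC 0) (ip_zero_r ip Hip e)
   end
 end.
Ltac ipnl := repeat match goal with
 | |- context [ip ?X ?y] =>
   match X with
   | plus ?a ?b => rw_by (ip X y) (ip a y + ip b y)%C (ip_plus_l ip Hip a b y)
   | minus ?a ?b => rw_by (ip X y) (ip a y - ip b y)%C (ip_minus_l ip Hip a b y)
   | opp ?a => rw_by (ip X y) (- ip a y)%C (ip_opp_l ip Hip a y)
   | scal ?k ?a => rw_by (ip X y) (Cconj k * ip a y)%C (ip_scal_l ip Hip k a y)
   | zero => rw_by (ip X y) (RtoC 0) (ip_zero_l ip Hip y)
   end
 end.
Ltac vext := apply (ext_ip ip Hip); intro e; ipn; try ring.

Lemma lsum_ext (F G : nat -> V) n : (forall k, (k < n)%nat -> F k = G k) -> lsum F n = lsum G n.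
Proof. induction n; intros h; simpl; auto. rewrite IHn by (intros; apply h; lia). rewrite h by lia. auto. Qed.

Lemma ip_lsum_r e (F : nat -> V) n :
  ip e (lsum F n) = @lsum C_NormedModule (fun k => ip e (F k)) n.
Proof. induction n; simpl. ipn. reflexivity. ipn. rewrite IHn. reflexivity. Qed.

Lemma ip_lsum_l e (F : nat -> V) n :
  ip (lsum F n) e = @lsum C_NormedModule (fun k => ip (F k) e) n.
Proof. induction n; simpl. ipnl. reflexivity. ipnl. rewrite IHn. reflexivity. Qed.

Lemma sp_zero (vs : nat -> V) n : in_span vs n zero.
Proof. exists (fun _ => RtoC 0). induction n; simpl; auto. rewrite <- IHn. vext. Qed.

Lemma sp_plus (vs : nat -> V) n a b : in_span vs n a -> in_span vs n b -> in_span vs n (plus a b).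
Proof.
  intros [x ->] [y ->]. exists (fun k => x k + y k)%C. induction n; simpl. vext.
  apply (ext_ip ip Hip). intro e. apply (f_equal (ip e)) in IHn. revert IHn. ipn. intros IH.
  rewrite <- IH. ring.
Qed.

Lemma sp_scal (vs : nat -> V) n (c : C) a : in_span vs n a -> in_span vs n (scal c a).
Proof.
  intros [x ->]. exists (fun k => c * x k)%C. induction n; simpl. vext.
  apply (ext_ip ip Hip). intro e. apply (f_equal (ip e)) in IHn. revert IHn. ipn. intros IH.
  rewrite <- IH. ring.
Qed.

Lemma sp_opp (vs : nat -> V) n a : in_span vs n a -> in_span vs n (opp a).
Proof. intros h. replace (opp a) with (scal (RtoC (-1)) a) by vext. apply sp_scal, h. Qed.

Lemma sp_minus (vs : nat -> V) n a b : in_span vs n a -> in_span vs n b -> in_span vs n (minus a b).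
Proof. intros ha hb. apply sp_plus; auto. apply sp_opp; auto. Qed.

Lemma sp_S (vs : nat -> V) n a : in_span vs n a -> in_span vs (S n) a.
Proof.
  intros [x ->]. exists (fun k => if Nat.eqb k n then RtoC 0 else x k). simpl.
  rewrite Nat.eqb_refl.
  match goal with |- _ = plus (lsum ?F n) _ =>
    rewrite (lsum_ext F (fun k => scal (x k) (vs k)) n) end.
  vext. intros k hk. destruct (Nat.eqb_spec k n); [lia|reflexivity].
Qed.

Lemma sp_mono (vs : nat -> V) n m a : (n <= m)%nat -> in_span vs n a -> in_span vs m a.
Proof. intros hle h. induction hle; auto. apply sp_S; auto. Qed.

Lemma lsum_zero (F : nat -> V) n : (forall k, (k < n)%nat -> F k = zero) -> lsum F n = zero.
Proof. induction n; intros h; simpl; auto. rewrite IHn by (intros; apply h; lia). rewrite h by lia. vext. Qed.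

Lemma sp_elem (vs : nat -> V) n k : (k < n)%nat -> in_span vs n (vs k).
Proof.
  intros hk. apply sp_mono with (S k); [lia|].
  exists (fun j => if Nat.eqb j k then RtoC 1 else RtoC 0). simpl. rewrite Nat.eqb_refl.
  rewrite lsum_zero. vext.
  intros j hj. destruct (Nat.eqb_spec j k); [lia|]. vext.
Qed.

Lemma sp_lsum (vs : nat -> V) n (F : nat -> V) m :
  (forall k, (k < m)%nat -> in_span vs n (F k)) -> in_span vs n (lsum F m).
Proof. induction m; intros h; simpl. apply sp_zero. apply sp_plus. apply IHm; intros; apply h; lia. apply h; lia. Qed.

Lemma sp_trans (vs us : nat -> V) n m w :
  (forall k, (k < m)%nat -> in_span vs n (us k)) -> in_span us m w -> in_span vs n w.
Proof. intros h [a ->]. apply sp_lsum. intros k hk. apply sp_scal. apply h; auto. Qed.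

Lemma ip_span_orth (vs : nat -> V) n w x :
  in_span vs n w -> (forall k, (k < n)%nat -> ip (vs k) x = RtoC 0) -> ip w x = RtoC 0.
Proof.
  intros [a ->] h. rewrite ip_lsum_l. apply lsumC_zero. intros k hk.
  ipnl. rewrite h by auto. cnorm. ring.
Qed.

Lemma ip_span_orth_r (vs : nat -> V) n w x :
  in_span vs n w -> (forall k, (k < n)%nat -> ip x (vs k) = RtoC 0) -> ip x w = RtoC 0.
Proof.
  intros hw h. rewrite (ip_conj ip Hip). rewrite (ip_span_orth vs n); auto.
  - ceq; lra.
  - intros k hk. rewrite (ip_conj ip Hip). rewrite h by auto. ceq; lra.
Qed.

Lemma span_orth_zero (vs : nat -> V) n w :
  in_span vs n w -> (forall k, (k < n)%nat -> ip (vs k) w = RtoC 0) -> w = zero.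
Proof. intros hw h. apply (ip_self_eq0 ip Hip). apply (ip_span_orth vs n); auto. Qed.

Lemma not_indep (vs : nat -> V) n : in_span vs n (vs n) -> ~ lin_indep vs (S n).
Proof.
  intros [a ha] hi.
  specialize (hi (fun k => if Nat.eqb k n then RtoC 1 else (- a k)%C)).
  assert (E : lsum (fun k => scal (if Nat.eqb k n then RtoC 1 else (- a k)%C) (vs k)) (S n) = zero).
  { simpl. rewrite Nat.eqb_refl.
    match goal with |- plus (lsum ?F n) _ = _ =>
      rewrite (lsum_ext F (fun k => scal (- a k)%C (vs k)) n) end.
    - apply (ext_ip ip Hip). intro e. ipn. rewrite !ip_lsum_r.
      apply (f_equal (ip e)) in ha. rewrite ip_lsum_r in ha.
      assert (L : forall m, @lsum C_NormedModule (fun k => ip e (scal (- a k)%C (vs k))) m =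
                  (- @lsum C_NormedModule (fun k => ip e (scal (a k) (vs k))) m)%C).
      { induction m; simpl. cnorm. ceq; lra. cnorm. rewrite IHm. ipn. ring. }
      rewrite L, <- ha. ring.
    - intros k hk. destruct (Nat.eqb_spec k n); [lia|reflexivity]. }
  specialize (hi E n (Nat.lt_succ_diag_r n)). cbv beta in hi. rewrite Nat.eqb_refl in hi.
  apply (f_equal fst) in hi. simpl in hi. lra.
Qed.

End Span.

Lemma lsumC_single (F : nat -> C) n j : (j < n)%nat -> (forall k, (k < n)%nat -> k <> j -> F k = RtoC 0) ->
  @lsum C_NormedModule F n = F j.
Proof.
  induction n; intros hj h; [lia|]. simpl. destruct (Nat.eq_dec j n) as [->|hne].
  - rewrite lsumC_zero. cnorm. ring. intros k hk. apply h; lia.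
  - rewrite IHn by (try lia; intros; apply h; lia). rewrite (h n) by lia. cnorm. ring.
Qed.

Section GS.
Context {H : NormedModule C_AbsRing} (ip : H -> H -> C) (Hip : is_inner_product ip) (f : C -> H)
  (Hindep : forall z n, lin_indep (fun k => dn f k z) (S n)).

Ltac ipn := repeat match goal with
 | |- context [ip ?e ?X] =>
   match X with
   | plus ?a ?b => rw_by (ip e X) (ip e a + ip e b)%C (ip_plus_r ip Hip e a b)
   | minus ?a ?b => rw_by (ip e X) (ip e a - ip e b)%C (ip_minus_r ip Hip e a b)
   | opp ?a => rw_by (ip e X) (- ip e a)%C (ip_opp_r ip Hip e a)
   | scal ?k ?a => rw_by (ip e X) (k * ip e a)%C (ip_scal_r ip Hip k e a)
   | zero => rw_by (ip e X) (RtoC 0) (ip_zero_r ip Hip e)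
   end
 end.
Ltac ipnl := repeat match goal with
 | |- context [ip ?X ?y] =>
   match X with
   | plus ?a ?b => rw_by (ip X y) (ip a y + ip b y)%C (ip_plus_l ip Hip a b y)
   | minus ?a ?b => rw_by (ip X y) (ip a y - ip b y)%C (ip_minus_l ip Hip a b y)
   | opp ?a => rw_by (ip X y) (- ip a y)%C (ip_opp_l ip Hip a y)
   | scal ?k ?a => rw_by (ip X y) (Cconj k * ip a y)%C (ip_scal_l ip Hip k a y)
   | zero => rw_by (ip X y) (RtoC 0) (ip_zero_l ip Hip y)
   end
 end.
Ltac vext := apply (ext_ip ip Hip); intro e; ipn; try ring.

Lemma dn_nz k z : dn f k z <> zero.
Proof.
  intros h0. apply (not_indep ip Hip (fun j => dn f j z) k); [| apply Hindep].
  cbv beta. rewrite h0. apply (sp_zero ip Hip).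
Qed.

Lemma dn_deriv k z : is_derive (dn f k) z (dn f (S k) z).
Proof.
  pose proof (dn_nz (S k) z) as hnz. simpl in hnz |- *. unfold cderiv, choose_or in *.
  destruct excluded_middle_informative as [h|h]. apply proj2_sig. contradiction.
Qed.

Lemma W_dn k z : W (dn f k) z (dn f (S k) z) zero.
Proof. exact (W_holo ip Hip _ _ _ (dn_deriv k z)). Qed.

Definition cc (QQ : nat -> C -> H) n j z : C := (ip (QQ j z) (dn f n z) / ip (QQ j z) (QQ j z))%C.
Fixpoint GS (n : nat) : nat -> C -> H :=
  match n with
  | O => fun _ z => dn f 0 z
  | S m => fun k z => if Nat.leb k m then GS m k z
           else minus (dn f (S m) z) (lsum (fun j => scal (cc (GS m) (S m) j z) (GS m j z)) (S m))
  end.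
Definition Q n z := GS n n z.
Definition c n j z := cc Q n j z.

Lemma GS_stable m k z : (k <= m)%nat -> GS m k z = Q k z.
Proof.
  revert k. induction m; intros k hk.
  - assert (k = 0%nat) by lia; subst; reflexivity.
  - destruct (Nat.eq_dec k (S m)). subst; reflexivity.
    simpl. replace (Nat.leb k m) with true by (symmetry; apply Nat.leb_le; lia). apply IHm; lia.
Qed.

Lemma Q_rec n z : Q n z = minus (dn f n z) (lsum (fun j => scal (c n j z) (Q j z)) n).
Proof.
  destruct n.
  - unfold Q. simpl. vext.
  - unfold Q at 1. cbn [GS]. replace (Nat.leb (S n) n) with false by (symmetry; apply Nat.leb_gt; lia).
    match goal with |- minus _ (lsum ?F _) = _ =>
      rewrite (lsum_ext F (fun j => scal (c (S n) j z) (Q j z))) end.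
    reflexivity.
    intros j hj. unfold c, cc. rewrite !GS_stable by lia. reflexivity.
Qed.

Lemma Q_g n z : in_span (fun k => dn f k z) n (minus (dn f n z) (Q n z)).
Proof.
  induction n as [n IH] using lt_wf_ind.
  replace (minus (dn f n z) (Q n z)) with (lsum (fun j => scal (c n j z) (Q j z)) n).
  2:{ rewrite (Q_rec n z). vext. }
  apply (sp_lsum ip Hip). intros j hj. apply (sp_scal ip Hip).
  replace (Q j z) with (minus (dn f j z) (minus (dn f j z) (Q j z))) by vext.
  apply (sp_minus ip Hip). apply (sp_elem ip Hip (fun k => dn f k z)); auto.
  apply (sp_mono ip Hip) with j; [lia|]. apply IH; auto.
Qed.

Lemma Q_in_g j n z : (j < n)%nat -> in_span (fun k => dn f k z) n (Q j z).
Proof.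
  intros hj. replace (Q j z) with (minus (dn f j z) (minus (dn f j z) (Q j z))) by vext.
  apply (sp_minus ip Hip). apply (sp_elem ip Hip (fun k => dn f k z)); auto.
  apply (sp_mono ip Hip) with j; [lia|]. apply Q_g.
Qed.

Lemma Q_nz n z : Q n z <> zero.
Proof.
  intros h0. apply (not_indep ip Hip (fun j => dn f j z) n); [| apply Hindep].
  pose proof (Q_g n z) as h. rewrite h0 in h. cbv beta.
  replace (dn f n z) with (minus (dn f n z) zero) by vext. exact h.
Qed.

Definition sr n z := norm (Q n z) ^ 2.

Lemma norm_Q_pos n z : 0 < norm (Q n z).
Proof.
  destruct (norm_ge_0 (Q n z)) as [h|h]; auto. exfalso. apply (Q_nz n z). apply norm_eq_zero. auto.
Qed.

Lemma sr_pos n z : 0 < sr n z.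
Proof. unfold sr. pose proof (norm_Q_pos n z). nra. Qed.

Lemma ip_QQ n z : ip (Q n z) (Q n z) = RtoC (sr n z).
Proof. apply (ip_self ip Hip). Qed.

Lemma Q_orth n z : forall j, (j < n)%nat -> ip (Q j z) (Q n z) = RtoC 0.
Proof.
  induction n as [n IH] using lt_wf_ind. intros j hj.
  rewrite (Q_rec n z). ipn. rewrite (ip_lsum_r ip Hip).
  rewrite (lsumC_single _ n j hj).
  - ipn. unfold c, cc. rewrite ip_QQ. assert (hs := sr_pos j z).
    field. intro E. apply (f_equal fst) in E. simpl in E. lra.
  - intros k hk hkj. ipn. destruct (Nat.lt_total j k) as [hjk|[heq|hkj']].
    + rewrite (IH k hk j hjk). ring.
    + lia.
    + rewrite (ip_conj ip Hip), (IH j hj k) by lia. ceq; lra.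
Qed.

Lemma Q_orth' n z j : (j < n)%nat -> ip (Q n z) (Q j z) = RtoC 0.
Proof. intros hj. rewrite (ip_conj ip Hip), Q_orth by auto. ceq; lra. Qed.

Lemma g_in_Q k n z : (k < n)%nat -> in_span (fun j => Q j z) n (dn f k z).
Proof.
  intros hk. replace (dn f k z) with (plus (Q k z) (lsum (fun j => scal (c k j z) (Q j z)) k)).
  2:{ rewrite (Q_rec k z) at 1. vext. }
  apply (sp_plus ip Hip). apply (sp_elem ip Hip (fun j => Q j z)); auto.
  apply (sp_mono ip Hip) with k; [lia|]. apply (sp_lsum ip Hip). intros j hj. apply (sp_scal ip Hip).
  apply (sp_elem ip Hip (fun j => Q j z)); auto.
Qed.

Lemma g_orth k n z : (k < n)%nat -> ip (dn f k z) (Q n z) = RtoC 0.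
Proof.
  intros hk. apply (ip_span_orth ip Hip (fun j => Q j z) n). apply g_in_Q; auto.
  intros j hj. apply Q_orth; auto.
Qed.

Lemma Q_spanQ_orth n z w : in_span (fun j => Q j z) n w -> ip (Q n z) w = RtoC 0.
Proof. intros h. apply (ip_span_orth_r ip Hip (fun j => Q j z) n); auto. intros; apply Q_orth'; auto. Qed.

Lemma ip_Q_g n z : ip (Q n z) (dn f n z) = RtoC (sr n z).
Proof.
  replace (dn f n z) with (plus (Q n z) (lsum (fun j => scal (c n j z) (Q j z)) n)).
  2:{ rewrite (Q_rec n z) at 1. vext. }
  ipn. rewrite ip_QQ, Q_spanQ_orth. ring.
  apply (sp_lsum ip Hip). intros j hj. apply (sp_scal ip Hip). apply (sp_elem ip Hip (fun j => Q j z)); auto.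
Qed.

Lemma proj_eq n z : orth_proj ip (fun k => dn f k z) n (dn f n z) = minus (dn f n z) (Q n z).
Proof.
  unfold orth_proj. apply choose_or_uniq.
  - split. apply Q_g. intros k hk.
    replace (minus (dn f n z) (minus (dn f n z) (Q n z))) with (Q n z) by vext. apply g_orth; auto.
  - intros w [hw ho].
    set (e0 := minus w (minus (dn f n z) (Q n z))).
    assert (he : e0 = zero).
    { apply (span_orth_zero ip Hip (fun k => dn f k z) n).
      - apply (sp_minus ip Hip); auto. apply Q_g.
      - intros k hk. specialize (ho k hk). pose proof (g_orth k n z hk) as h2.
        unfold e0. ipn. revert ho. ipn. intros ho. rewrite <- h2.
        apply (f_equal (fun x => ip (dn f k z) (dn f n z) - x))%C in ho. ring_simplify in ho.
        ring_simplify. rewrite <- ho. ring. }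
    apply (ext_ip ip Hip). intro e. apply (f_equal (ip e)) in he. unfold e0 in he. revert he. ipn.
    intros he. apply (f_equal (fun x => x + (ip e (dn f n z) - ip e (Q n z)))%C) in he.
    ring_simplify in he. rewrite he. ring.
Qed.

Lemma qn_eq n z : qn ip f n z = Q n z.
Proof. unfold qn. rewrite proj_eq. vext. Qed.

Lemma un_eq n : un ip f n = fun z => scal (RtoC (/ norm (Q n z))) (Q n z).
Proof. apply functional_extensionality. intros z. unfold un, rn. rewrite qn_eq. reflexivity. Qed.


Definition th n z := (ip (Q n z) (dn f (S n) z) * RtoC (/ sr n z))%C.
Definition thp n z := match n with O => RtoC 0 | S m => th m z end.
Definition lam n z := (th n z - thp n z)%C.

Lemma RtoC_nz (x : R) : x <> 0 -> RtoC x <> RtoC 0.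
Proof. intros h E. apply (f_equal fst) in E. simpl in E. auto. Qed.

Lemma W_sr n z w wb : W (Q n) z w wb ->
  @W C_NormedModule (fun x => RtoC (sr n x)) z (ip wb (Q n z) + ip (Q n z) w)%C (ip w (Q n z) + ip (Q n z) wb)%C.
Proof. intros h. eapply W_ext; [|exact (W_ip ip Hip _ _ _ _ _ _ _ h h)]. intros x. apply ip_QQ. Qed.

Lemma W_srinv n z al alb : @W C_NormedModule (fun x => RtoC (sr n x)) z al alb ->
  @W C_NormedModule (fun x => RtoC (/ sr n x)) z (RtoC (- / (sr n z ^ 2)) * al)%C (RtoC (- / (sr n z ^ 2)) * alb)%C.
Proof.
  intros h. apply (W_chain (sr n) Rinv z al alb _ h).
  pose proof (sr_pos n z). auto_derive. lra. field. lra.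
Qed.

Lemma c_eq n j x : c n j x = (ip (Q j x) (dn f n x) * RtoC (/ sr j x))%C.
Proof.
  unfold c, cc. rewrite ip_QQ. unfold Cdiv. f_equal. rewrite RtoC_inv. reflexivity.
  pose proof (sr_pos j x). lra.
Qed.

Lemma W_c n j z w wb : W (Q j) z w wb -> exists al alb, @W C_NormedModule (c n j) z al alb.
Proof.
  intros h. pose proof (W_sr j z w wb h) as h1. apply W_srinv in h1.
  pose proof (W_ip ip Hip _ _ _ _ _ _ _ h (W_dn n z)) as h2.
  pose proof (W_mult _ _ _ _ _ _ _ h2 h1) as h3.
  eexists; eexists. eapply W_ext; [|exact h3]. intros x. symmetry. apply c_eq.
Qed.

Lemma th_c n : forall z, c (S n) n z = th n z.
Proof. intros z. rewrite c_eq. reflexivity. Qed.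

Lemma D_struct n : forall z, exists wb,
  W (Q n) z (plus (Q (S n) z) (scal (lam n z) (Q n z))) wb /\ in_span (fun k => Q k z) n wb.
Proof.
  induction n as [n IH] using lt_wf_ind. intros z.
  set (Qz := fun k => Q k z).
  assert (PS : forall m, (m <= n)%nat -> exists Sw Sb,
    W (fun x => lsum (fun j => scal (c n j x) (Q j x)) m) z Sw Sb /\
    in_span Qz n Sb /\ in_span Qz (S n) Sw /\
    ip (Q n z) Sw = (if Nat.eqb m n then thp n z * RtoC (sr n z) else RtoC 0)%C).
  { induction m as [|m IHm]; intros hm.
    - exists zero, zero. split; [simpl; exact (W_const ip Hip zero z)|]. split; [apply (sp_zero ip Hip)|].
      split; [apply (sp_zero ip Hip)|]. ipn. destruct (Nat.eqb_spec 0 n); [subst; simpl; ring|reflexivity].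
    - destruct (IHm ltac:(lia)) as [Sw [Sb [hW [hb [hw hip]]]]].
      destruct (IH m ltac:(lia) z) as [wbm [hQm hwbm]].
      destruct (W_c n m z _ _ hQm) as [al [alb hc]].
      pose proof (W_scal_fun ip Hip _ _ _ _ _ _ _ hc hQm) as hF.
      eexists; eexists. split; [exact (W_plus ip Hip _ _ _ _ _ _ _ hW hF)|].
      split; [|split].
      + apply (sp_plus ip Hip); auto. apply (sp_plus ip Hip); apply (sp_scal ip Hip).
        apply (sp_elem ip Hip Qz); lia. apply (sp_mono ip Hip) with m; [lia|auto].
      + apply (sp_plus ip Hip); auto. apply (sp_plus ip Hip); apply (sp_scal ip Hip).
        apply (sp_elem ip Hip Qz); lia. apply (sp_plus ip Hip). apply (sp_elem ip Hip Qz); lia.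
        apply (sp_scal ip Hip). apply (sp_elem ip Hip Qz); lia.
      + ipn. rewrite hip. rewrite (Q_orth' n z m) by lia.
        destruct (Nat.eqb_spec m n); [lia|].
        destruct (Nat.eqb_spec (S m) n) as [hsn|hsn].
        * subst n. rewrite ip_QQ. simpl thp. rewrite th_c. ring.
        * rewrite (Q_orth' n z (S m)) by lia. ring. }
  destruct (PS n (le_n n)) as [Sw [Sb [hW [hb [hw hip]]]]].
  rewrite Nat.eqb_refl in hip.
  assert (hQn : W (Q n) z (minus (dn f (S n) z) Sw) (minus zero Sb)).
  { eapply W_ext; [|exact (W_minus ip Hip _ _ _ _ _ _ _ (W_dn n z) hW)].
    intros x. symmetry. apply Q_rec. }
  set (wn := minus (dn f (S n) z) Sw) in *.
  assert (Ho : forall k, (k < n)%nat -> ip (Q k z) wn = RtoC 0).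
  { intros k hk. destruct (IH k hk z) as [wbk [hQk hwbk]].
    pose proof (W_ip ip Hip _ _ _ _ _ _ _ hQk hQn) as h1.
    assert (h2 : @W C_NormedModule (fun x => ip (Q k x) (Q n x)) z (RtoC 0) (RtoC 0)).
    { eapply W_ext; [|apply W_constC]. intros x. cbv beta. symmetry. apply Q_orth; auto. }
    destruct (W_unique ipC ipC_ok _ _ _ _ _ _ h1 h2) as [E _].
    rewrite (ip_span_orth ip Hip Qz k) in E; auto.
    - change ((RtoC 0 + ip (Q k z) wn)%C = RtoC 0) in E. rewrite <- E. ring.
    - intros j hj. apply Q_orth; lia. }
  assert (E : wn = plus (Q (S n) z) (scal (lam n z) (Q n z))).
  { set (e0 := minus wn (plus (Q (S n) z) (scal (lam n z) (Q n z)))).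
    assert (he : e0 = zero).
    { apply (span_orth_zero ip Hip Qz (S n)).
      - replace e0 with (minus (minus (minus (dn f (S n) z) (Q (S n) z)) Sw) (scal (lam n z) (Q n z))) by (unfold e0, wn; vext).
        apply (sp_minus ip Hip); [apply (sp_minus ip Hip); auto|].
        + replace (minus (dn f (S n) z) (Q (S n) z)) with (lsum (fun j => scal (c (S n) j z) (Q j z)) (S n)).
          2:{ rewrite (Q_rec (S n) z). vext. }
          apply (sp_lsum ip Hip). intros j hj. apply (sp_scal ip Hip). apply (sp_elem ip Hip Qz); auto.
        + apply (sp_scal ip Hip). apply (sp_elem ip Hip Qz); lia.
      - intros k hk. unfold e0, Qz. ipn. destruct (Nat.eq_dec k n) as [->|hkn].
        + unfold wn. ipn. rewrite hip, ip_QQ, (Q_orth (S n) z n) by lia.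
          unfold lam, th. pose proof (sr_pos n z).
          rewrite RtoC_inv by lra. field. apply RtoC_nz; lra.
        + rewrite Ho by lia. rewrite (Q_orth (S n) z k), (Q_orth n z k) by lia. ring. }
    apply (ext_ip ip Hip). intro e. apply (f_equal (ip e)) in he. unfold e0 in he. revert he. ipn.
    intros he. apply (f_equal (fun x => x + (ip e (Q (S n) z) + lam n z * ip e (Q n z)))%C) in he.
    ring_simplify in he. rewrite he. ring. }
  exists (minus zero Sb). split.
  - rewrite <- E. exact hQn.
  - apply (sp_minus ip Hip); auto. apply (sp_zero ip Hip).
Qed.

Ltac toC := match goal with |- ?a = ?b => change (@eq C a b) end.

Lemma W_sr_s n z : @W C_NormedModule (fun x => RtoC (sr n x)) z (lam n z * RtoC (sr n z))%C (Cconj (lam n z) * RtoC (sr n z))%C.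
Proof.
  destruct (D_struct n z) as [wb [hW hwb]].
  eapply W_val; [exact (W_sr n z _ _ hW)| |]; toC.
  - rewrite (ip_span_orth ip Hip (fun k => Q k z) n wb); auto.
    2:{ intros j hj. apply Q_orth; auto. }
    ipn. rewrite (Q_orth (S n) z n), ip_QQ by lia. ring.
  - rewrite (Q_spanQ_orth n z wb hwb). ipnl. rewrite (Q_orth' (S n) z n), ip_QQ by lia. ring.
Qed.

Lemma W_lnsr n z : @W C_NormedModule (fun x => RtoC (ln (sr n x))) z (lam n z) (Cconj (lam n z)).
Proof.
  pose proof (sr_pos n z) as hs.
  assert (hd : is_derive ln (sr n z) (/ sr n z)) by (auto_derive; [lra| field; lra]).
  eapply W_val; [exact (W_chain _ _ _ _ _ _ (W_sr_s n z) hd)| |]; toC;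
  rewrite RtoC_inv by lra; field; apply RtoC_nz; lra.
Qed.

Lemma W_th n z : exists a, @W C_NormedModule (th n) z a (RtoC (sr (S n) z / sr n z)).
Proof.
  destruct (D_struct n z) as [wb [hW hwb]].
  pose proof (W_ip ip Hip _ _ _ _ _ _ _ hW (W_dn (S n) z)) as h1.
  pose proof (W_srinv _ _ _ _ (W_sr_s n z)) as h2.
  pose proof (W_mult _ _ _ _ _ _ _ h1 h2) as h3.
  eexists. eapply W_val; [exact h3| reflexivity |]. toC.
  ipnl. ipn. rewrite ip_Q_g.
  pose proof (sr_pos n z). pose proof (sr_pos (S n) z).
  generalize (sr n z) (sr (S n) z) H0 H1. intros s0 s1 hs0 hs1. csolve; lra.
Qed.

Lemma W_cth n z : exists a, @W C_NormedModule (fun x => Cconj (th n x)) z (RtoC (sr (S n) z / sr n z)) a.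
Proof.
  destruct (W_th n z) as [a h]. exists (Cconj a). eapply W_val; [exact (W_conj _ _ _ _ h)| |reflexivity].
  apply Cconj_RtoC.
Qed.

Lemma norm_Q_sqrt n x : norm (Q n x) = sqrt (sr n x).
Proof. unfold sr. rewrite sqrt_pow2; auto. apply norm_ge_0. Qed.

Lemma hN_eq n z : hN ip f (S n) z = sr (S n) z / sr n z.
Proof.
  unfold hN. rewrite !un_eq.
  pose proof (sr_pos n z) as hs. pose proof (sr_pos (S n) z) as hs'.
  assert (hd : ex_derive (fun y => / sqrt y) (sr n z)).
  { auto_derive. split; [lra|split; auto]. apply Rgt_not_eq, sqrt_lt_R0; lra. }
  destruct hd as [dphi hd].
  pose proof (W_chain _ _ _ _ _ _ (W_sr_s n z) hd) as ha.
  destruct (D_struct n z) as [wb [hW hwb]].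
  assert (hu : W (fun x => scal (RtoC (/ norm (Q n x))) (Q n x)) z
     (plus (scal (RtoC dphi * (lam n z * RtoC (sr n z)))%C (Q n z)) (scal (RtoC (/ sqrt (sr n z))) (plus (Q (S n) z) (scal (lam n z) (Q n z)))))
     (plus (scal (RtoC dphi * (Cconj (lam n z) * RtoC (sr n z)))%C (Q n z)) (scal (RtoC (/ sqrt (sr n z))) wb))).
  { eapply W_ext; [|exact (W_scal_fun ip Hip _ _ _ _ _ _ _ ha hW)].
    intros x. cbv beta. rewrite norm_Q_sqrt. reflexivity. }
  rewrite (W_wirt_eq ip Hip _ _ _ _ hu).
  ipnl. ipn. rewrite (Q_orth' (S n) z n), ip_QQ by lia. rewrite !Cconj_RtoC.
  rewrite !norm_Q_sqrt.
  match goal with |- Cmod ?X ^ 2 = _ =>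
    replace X with (RtoC (/ sqrt (sr (S n) z) * / sqrt (sr n z) * sr (S n) z)) by ceq end.
  rewrite Cmod_R, pow2_abs.
  pose proof (sqrt_lt_R0 _ hs) as q1. pose proof (sqrt_lt_R0 _ hs') as q2.
  pose proof (sqrt_sqrt _ (Rlt_le _ _ hs)) as e1. pose proof (sqrt_sqrt _ (Rlt_le _ _ hs')) as e2.
  generalize (sqrt (sr n z)) (sqrt (sr (S n) z)) q1 q2 e1 e2. intros a b qa qb ea eb.
  rewrite <- ea, <- eb. field. split; lra.
Qed.

End GS.

Lemma Cconj_minus (a b : C) : Cconj (a - b)%C = (Cconj a - Cconj b)%C.
Proof. ceq. Qed.

Theorem mainTheorem7
  (H : CompleteNormedModule C_AbsRing) (ip : H -> H -> C)
  (Hip : is_inner_product ip) (Hsep : @separable H)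
  (w1 w2 : C) (Hlat : lattice_basis w1 w2)
  (f : C -> H) (Hf : holomorphic f)
  (Hindep : forall (z : C) (n : nat), lin_indep (fun k => dn f k z) (S n))
  (Hper : forall m n : Z, exists (c : C -> C) (V : H -> H),
      holomorphicC c /\ (forall z, c z <> 0%C) /\ is_unitary ip V /\
      forall z, f (z + lattice_pt w1 w2 m n)%C = scal (c z) (V (f z))) :
  forall N : nat, (1 <= N)%nat ->
    (forall z, 0 < hN ip f N z) /\
    exists k : C -> C,
      (forall z, is_wirt_bar (fun w => RtoC (ln (hN ip f N w))) z (k z)) /\
      (forall z, is_wirt k z
         (RtoC (hN ip f (N - 1) z - 2 * hN ip f N z + hN ip f (N + 1) z))).
Proof.
  intros N hN1. destruct N as [|M]; [lia|].
  pose proof (sr_pos ip Hip f Hindep) as Hs.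
  pose proof (hN_eq ip Hip f Hindep) as Eh.
  split.
  - intros z. rewrite Eh. apply Rdiv_lt_0_compat; apply Hs.
  - exists (fun x => Cconj (lam ip f (S M) x) - Cconj (lam ip f M x))%C. split.
    + intros z.
      pose proof (W_minusC _ _ _ _ _ _ _ (W_lnsr ip Hip f Hindep (S M) z) (W_lnsr ip Hip f Hindep M z)) as h.
      refine (proj2 (W_wirt ipC ipC_ok _ _ _ _ _)).
      eapply W_ext; [|exact h]. intros x. cbv beta. rewrite Eh, ln_div by apply Hs.
      rewrite RtoC_minus. reflexivity.
    + intros z.
      destruct (W_cth ip Hip f Hindep (S M) z) as [a1 h1].
      destruct (W_cth ip Hip f Hindep M z) as [a2 h2].
      assert (h3 : exists a3, @W C_NormedModule (fun x => Cconj (thp ip f M x)) z (RtoC (hN ip f M z)) a3).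
      { destruct M as [|p].
        - exists (RtoC 0). eapply W_ext; [|apply (W_constC (RtoC 0))]. intros x. simpl. ceq; lra.
        - rewrite Eh. exact (W_cth ip Hip f Hindep p z). }
      destruct h3 as [a3 h3].
      pose proof (W_minusC _ _ _ _ _ _ _ (W_minusC _ _ _ _ _ _ _ h1 h2) (W_minusC _ _ _ _ _ _ _ h2 h3)) as h.
      refine (proj1 (W_wirt ipC ipC_ok _ _ _ _ _)).
      eapply W_val; [eapply W_ext; [|exact h]| |reflexivity].
      * intros x. cbv beta. unfold lam. simpl thp. rewrite !Cconj_minus. reflexivity.
      * replace (S M - 1)%nat with M by lia. replace (S M + 1)%nat with (S (S M)) by lia.
        rewrite !Eh. ceq.
Qed.
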